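(* Let $\ell\ge1$, $n\ge1$, ${\mathbf y}_1,\dots,{\mathbf y}_n\in\mathbb{F}_2^\ell$, and let $M=[P_{{\mathbf y}_1}\ P_{{\mathbf y}_2}\ \cdots\ P_{{\mathbf y}_n}]$ be the $2^\ell\times n2^\ell$ binary matrix formed by $n$ dyadic permutation matrices side by side. Then the Tanner graph of $M$ is acyclic, and it has exactly $2^\ell(2^{n-1}-1)$ absorbing sets whose induced subgraphs are connected; each of them is an $(a,0)$-absorbing set with $a$ even and $2\le a\le n$.
   Context: For ${\mathbf a}\in\mathbb{F}_2^\ell$, $P_{\mathbf a}$ is the $2^\ell\times2^\ell$ binary matrix with $(P_{\mathbf a})_{{\mathbf x},{\mathbf y}}=1$ iff ${\mathbf y}={\mathbf x}+{\mathbf a}$ (rows/columns indexed by $\mathbb{F}_2^\ell$). The Tanner graph of a binary matrix is the bipartite graph with check nodes = rows, variable nodes = columns, edges at the $1$-entries. For a nonempty set $\mathcal{A}$ of variable nodes, let $G_{\mathcal{A}\cup\mathcal{N}(\mathcal{A})}$ be the subgraph induced by $\mathcal{A}$ and its neighborhood $\mathcal{N}(\mathcal{A})$. $\mathcal{A}$ is an $(a,b)$-absorbing set if $|\mathcal{A}|=a$, the induced subgraph has exactly $b$ check nodes of odd degree, and every $v\in\mathcal{A}$ has strictly more neighbors of even degree than of odd degree in the induced subgraph. Only absorbing sets whose induced subgraph is connected are counted. *)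

(* Defs.v *)
From mathcomp Require Import all_boot all_order all_algebra.
Set Implicit Arguments. Unset Strict Implicit. Unset Printing Implicit Defensive.
Import GRing.Theory.
Local Open Scope ring_scope.

Definition bmatrix (R C : finType) := R -> C -> bool.

Definition dyadic_perm (l : nat) (a : 'rV['F_2]_l) : bmatrix 'rV['F_2]_l 'rV['F_2]_l :=
  fun x y => y == x + a.

(* M = [P_{y_1} ... P_{y_n}]: column (j, y) is column y of block j. *)
Definition dyadic_concat (l n : nat) (ys : 'I_n -> 'rV['F_2]_l)
  : bmatrix 'rV['F_2]_l ('I_n * 'rV['F_2]_l)%type :=
  fun x jc => dyadic_perm (ys jc.1) x jc.2.

Section Tanner.
Variables (R C : finType) (H : bmatrix R C).

(* Tanner graph: vertices are check nodes (inl r) and variable nodes (inr c);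
   edges at 1-entries. *)
Definition tanner_adj : rel (R + C) :=
  fun u w => match u, w with
             | inl r, inr c => H r c
             | inr c, inl r => H r c
             | _, _ => false
             end.

Definition tanner_acyclic : Prop :=
  forall s : seq (R + C), ~ (ucycle tanner_adj s /\ 3 <= size s)%N.

Definition nbhd (A : {set C}) : {set R} := [set r | [exists c in A, H r c]].

Definition ind_deg (A : {set C}) (r : R) : nat := #|[set c in A | H r c]|.

Definition odd_checks (A : {set C}) : {set R} :=
  [set r in nbhd A | odd (ind_deg A r)].

Definition even_checks (A : {set C}) : {set R} :=
  [set r in nbhd A | ~~ odd (ind_deg A r)].

Definition absorbing_set (a b : nat) (A : {set C}) : bool :=
  [&& A != set0, #|A| == a, #|odd_checks A| == b &
      [forall v in A,
        (#|[set r in odd_checks A | H r v]| < #|[set r in even_checks A | H r v]|)%N]].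

(* A is an absorbing set (for some (a,b)); a and b are necessarily
   #|A| and the number of odd checks. *)
Definition is_absorbing (A : {set C}) : bool :=
  absorbing_set #|A| #|odd_checks A| A.

Definition ind_vertices (A : {set C}) : {set R + C} :=
  [set u | match u with inl r => r \in nbhd A | inr c => c \in A end].

Definition ind_connected (A : {set C}) : bool :=
  [forall u in ind_vertices A, forall w in ind_vertices A,
    connect (fun x y => [&& x \in ind_vertices A, y \in ind_vertices A
                         & tanner_adj x y]) u w].

End Tanner.

(* Main.v *)
Require Import Defs.
From mathcomp Require Import all_boot all_order all_algebra.
Set Implicit Arguments. Unset Strict Implicit. Unset Printing Implicit Defensive.
Import GRing.Theory.

Lemma addvv l (a : 'rV['F_2]_l) : (a + a = 0)%R.
Proof. by apply/matrixP=> i j; rewrite !mxE addrr_pchar2 // pchar_Fp. Qed.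

Lemma addvK l (a b : 'rV['F_2]_l) : (a + b + b = a)%R.
Proof. by rewrite -addrA addvv addr0. Qed.

Definition chk l n (ys : 'I_n -> 'rV['F_2]_l) (c : 'I_n * 'rV['F_2]_l) : 'rV['F_2]_l :=
  (c.2 + ys c.1)%R.

Lemma MP l n (ys : 'I_n -> 'rV['F_2]_l) x c :
  dyadic_concat ys x c = (x == chk ys c).
Proof.
rewrite /dyadic_concat /dyadic_perm /chk.
by apply/eqP/eqP => ->; rewrite addvK.
Qed.

Lemma acyc l n (ys : 'I_n -> 'rV['F_2]_l) : tanner_acyclic (dyadic_concat ys).
Proof.
move=> s [/andP[cyc un] sz].
set e := tanner_adj _ in cyc.
have [c cs] : exists c, inr c \in s.
  case: s cyc un sz => [|a [|b t]] //= cyc _ _.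
  move: cyc => /andP[eab _].
  case: a b eab => [r|c] [r'|c'] //= _; [exists c'|exists c];
    by rewrite !inE eqxx ?orbT.
case: (rot_to cs) => i t ht.
have := rot_uniq i s; rewrite ht un => un'.
have := rot_cycle i e s; rewrite ht cyc => cyc'.
move: sz; rewrite -(size_rot i s) ht.
case: t ht un' cyc' => [|a [|b u]] //= _ un' cyc' _.
move: cyc' => /andP[eca]; rewrite -/(path e a (rcons (b :: u) (inr c))) rcons_path => /andP[_ ela].
have lm : last b u \in b :: u by apply: mem_last.
case: a un' eca => [r|c'] //= un' eca.
case el: (last b u) ela lm => [r'|c'] //= ela lm.
move: eca ela; rewrite !MP => /eqP ea /andP[_ /eqP eb].
  move: un' => /and4P[_ /negP H _ _]; apply: H; rewrite ea -eb; exact: lm.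
by rewrite andbF in ela.
Qed.

Definition col l n (ys : 'I_n -> 'rV['F_2]_l) x := [set c | chk ys c == x].

Lemma nbhd_col l n (ys : 'I_n -> 'rV['F_2]_l) (A : {set 'I_n * 'rV['F_2]_l}) x :
  A \subset col ys x -> A != set0 ->
  forall r, (r \in nbhd (dyadic_concat ys) A) = (r == x).
Proof.
move=> sub ne r; rewrite inE; apply/existsP/eqP.
  case=> c /andP[cA]; rewrite MP => /eqP ->.
  by have := subsetP sub c cA; rewrite inE => /eqP.
move=> ->; case/set0Pn: ne => c cA; exists c; rewrite cA MP /=.
by have := subsetP sub c cA; rewrite inE eq_sym.
Qed.

Lemma deg_col l n (ys : 'I_n -> 'rV['F_2]_l) (A : {set 'I_n * 'rV['F_2]_l}) x :
  A \subset col ys x -> ind_deg (dyadic_concat ys) A x = #|A|.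
Proof.
move=> sub; rewrite /ind_deg; apply: eq_card => c; rewrite inE MP.
case cA: (c \in A) => //=.
by have := subsetP sub c cA; rewrite inE eq_sym.
Qed.

Lemma checks_col l n (ys : 'I_n -> 'rV['F_2]_l) (A : {set 'I_n * 'rV['F_2]_l}) x :
  A \subset col ys x -> A != set0 ->
  (forall r, (r \in odd_checks (dyadic_concat ys) A) = (r == x) && odd #|A|) /\
  (forall r, (r \in even_checks (dyadic_concat ys) A) = (r == x) && ~~ odd #|A|).
Proof.
move=> sub ne; have nb := nbhd_col sub ne.
split=> r; rewrite /odd_checks /even_checks in_set nb;
  case: eqP => //= ->; by rewrite deg_col.
Qed.

Lemma card_cond l (x : 'rV['F_2]_l) (b : bool) : #|[set r | (r == x) && b]| = b.
Proof.
case: b.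
  rewrite (_ : [set r | _] = [set x]) ?cards1 //.
  by apply/setP => r; rewrite !inE andbT.
rewrite (_ : [set r | _] = set0) ?cards0 //.
by apply/setP => r; rewrite !inE andbF.
Qed.

Lemma adj_counts l n (ys : 'I_n -> 'rV['F_2]_l) (A : {set 'I_n * 'rV['F_2]_l}) x v :
  A \subset col ys x -> A != set0 -> v \in A ->
  #|[set r in odd_checks (dyadic_concat ys) A | dyadic_concat ys r v]| = odd #|A| /\
  #|[set r in even_checks (dyadic_concat ys) A | dyadic_concat ys r v]| = ~~ odd #|A|.
Proof.
move=> sub ne vA; have [oc ec] := checks_col sub ne.
have cv : chk ys v = x by have := subsetP sub v vA; rewrite inE => /eqP.
split; [rewrite -(card_cond x (odd #|A|)) | rewrite -(card_cond x (~~ odd #|A|))];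
  apply: eq_card => r; rewrite in_set ?oc ?ec MP cv in_set;
  by case: (r == x); rewrite ?andbT ?andbF.
Qed.

Lemma charac l n (ys : 'I_n -> 'rV['F_2]_l) (A : {set 'I_n * 'rV['F_2]_l}) :
  (is_absorbing (dyadic_concat ys) A && ind_connected (dyadic_concat ys) A) =
  [exists x, [&& A \subset col ys x, A != set0 & ~~ odd #|A|]].
Proof.
apply/idP/existsP.
  move=> /andP[ab co]; move: (ab); rewrite /is_absorbing /absorbing_set.
  move=> /and4P[ne _ _ /forall_inP fa].
  case/set0Pn: (ne) => c0 c0A; exists (chk ys c0).
  have sub : A \subset col ys (chk ys c0).
    apply/subsetP => c cA; rewrite inE.
    have V0 : inr c0 \in ind_vertices (dyadic_concat ys) A by rewrite inE.
    have V1 : inr c \in ind_vertices (dyadic_concat ys) A by rewrite inE.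
    have cn := forall_inP (forall_inP co _ V0) _ V1.
    set a := [pred u : 'rV['F_2]_l + ('I_n * 'rV['F_2]_l) |
               match u with inl r => r == chk ys c0 | inr c => chk ys c == chk ys c0 end].
    have cl : closed (fun x y => [&& x \in ind_vertices (dyadic_concat ys) A,
                         y \in ind_vertices (dyadic_concat ys) A
                         & tanner_adj (dyadic_concat ys) x y]) a.
      move=> u w /and3P[_ _]; case: u => [r|c'] ; case: w => [r'|c''] //=;
        rewrite MP => /eqP ->; by rewrite !inE.
    have := closed_connect cl cn; rewrite !inE /= eqxx.
    by move=> <-.
  rewrite sub ne /=.
  have [h1 h2] := adj_counts sub ne c0A.
  have := fa c0 c0A; rewrite h1 h2.
  by case: (odd #|A|).
case=> x /and3P[sub ne ev]; apply/andP; split.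
  rewrite /is_absorbing /absorbing_set ne !eqxx /=.
  apply/forall_inP => v vA; have [h1 h2] := adj_counts sub ne vA.
  by rewrite h1 h2 (negbTE ev).
have xV : inl x \in ind_vertices (dyadic_concat ys) A.
  by rewrite inE /= (nbhd_col sub ne).
have key : forall u, u \in ind_vertices (dyadic_concat ys) A -> u = inl x \/
   (tanner_adj (dyadic_concat ys) u (inl x) && tanner_adj (dyadic_concat ys) (inl x) u).
  case=> [r|c]; rewrite inE /=.
    by rewrite (nbhd_col sub ne) => /eqP ->; left.
  move=> cA; right; rewrite MP.
  by have := subsetP sub c cA; rewrite inE eq_sym => ->.
apply/forall_inP => u uV; apply/forall_inP => w wV.
case: (key u uV) => [eu|/andP[a1 a2]]; case: (key w wV) => [ew|/andP[b1 b2]].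
- by rewrite eu ew connect0.
- by rewrite eu; apply: connect1; rewrite xV wV b2.
- by rewrite ew; apply: connect1; rewrite xV uV a1.
- apply: (@connect_trans _ _ (inl x)); apply: connect1.
    by rewrite xV uV a1.
  by rewrite xV wV b2.
Qed.

Lemma even_count n : (0 < n)%N -> #|[set B : {set 'I_n} | ~~ odd #|B|]| = 2 ^ n.-1.
Proof.
move=> hn; pose j0 := Ordinal hn.
pose t := fun B : {set 'I_n} => if j0 \in B then B :\ j0 else j0 |: B.
have tK : involutive t.
  move=> B; rewrite /t; case jB: (j0 \in B).
    by rewrite setD11 (setD1K jB).
  by rewrite setU11 setU1K // jB.
have todd : forall B, odd #|t B| = ~~ odd #|B|.
  move=> B; rewrite /t; case jB: (j0 \in B).
    by rewrite [in RHS](cardsD1 j0 B) jB /= negbK.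
  by rewrite cardsU1 jB.
set Ev := [set B : {set 'I_n} | ~~ odd #|B|].
have hC : t @: Ev = ~: Ev.
  apply/setP => B; rewrite [in RHS]inE; apply/imsetP/idP.
    by case=> B' hB' ->; rewrite !inE todd; rewrite inE in hB'; rewrite hB'.
  move=> hB; exists (t B); last by rewrite tK.
  by rewrite !inE todd; rewrite inE negbK in hB; rewrite hB.
have := cardsC Ev; rewrite -hC card_imset; last exact: (can_inj tK).
rewrite -cardsT -powersetT card_powerset cardsT card_ord addnn.
have -> : 2 ^ n = 2 * 2 ^ n.-1 by rewrite -expnS prednK.
by rewrite -mul2n => /eqP; rewrite eqn_pmul2l // => /eqP.
Qed.

Definition fmap l n (ys : 'I_n -> 'rV['F_2]_l) (p : 'rV['F_2]_l * {set 'I_n}) :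
  {set 'I_n * 'rV['F_2]_l} := [set (j, p.1 + ys j)%R | j in p.2].

Lemma mem_f l n (ys : 'I_n -> 'rV['F_2]_l) x B j :
  ((j, x + ys j)%R \in fmap ys (x, B)) = (j \in B).
Proof.
apply/imsetP/idP; first by case=> j' hj' [-> _].
by move=> h; exists j.
Qed.

Lemma card_f l n (ys : 'I_n -> 'rV['F_2]_l) x B : #|fmap ys (x, B)| = #|B|.
Proof. by rewrite card_imset // => j j' []. Qed.

Lemma f_sub l n (ys : 'I_n -> 'rV['F_2]_l) x B : fmap ys (x, B) \subset col ys x.
Proof. by apply/subsetP => c /imsetP[j _ ->]; rewrite inE /chk /= addvK. Qed.

Lemma count_main l n (ys : 'I_n -> 'rV['F_2]_l) : (0 < n)%N ->
  #|[set A : {set ('I_n * 'rV['F_2]_l)%type} |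
      is_absorbing (dyadic_concat ys) A && ind_connected (dyadic_concat ys) A]|
  = (2 ^ l * (2 ^ n.-1 - 1))%N.
Proof.
move=> hn.
pose E := [set B : {set 'I_n} | (B != set0) && ~~ odd #|B|].
have hS : [set A | is_absorbing (dyadic_concat ys) A && ind_connected (dyadic_concat ys) A]
   = fmap ys @: setX [set: 'rV['F_2]_l] E.
  apply/setP => A; rewrite inE charac; apply/existsP/imsetP.
    case=> x /and3P[sub ne ev].
    pose B := [set j | (j, x + ys j)%R \in A].
    have hA : A = fmap ys (x, B).
      apply/setP => c; apply/idP/idP.
        move=> cA; apply/imsetP; exists c.1.
          have cv : chk ys c = x by have := subsetP sub c cA; rewrite inE => /eqP.
          have e2 : c.2 = (x + ys c.1)%R by rewrite -cv /chk addvK.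
          by rewrite inE -e2 -surjective_pairing.
        have cv : chk ys c = x by have := subsetP sub c cA; rewrite inE => /eqP.
        have e2 : c.2 = (x + ys c.1)%R by rewrite -cv /chk addvK.
        by rewrite /= -e2 -surjective_pairing.
      by case/imsetP => j; rewrite inE => h ->.
    exists (x, B) => //.
    rewrite !inE /= -card_gt0 -(card_f ys x B) -hA card_gt0 ne ev.
    done.
  case=> [[x B]]; rewrite !inE /= => /andP[ne ev] ->; exists x.
  by rewrite f_sub -card_gt0 card_f card_gt0 ne ev.
rewrite hS card_in_imset.
  rewrite cardsX cardsT card_mx card_Fp // mul1n.
  have -> : E = [set B : {set 'I_n} | ~~ odd #|B|] :\ set0.
    by apply/setP => B; rewrite !inE.
  have h := cardsD1 set0 [set B : {set 'I_n} | ~~ odd #|B|].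
  rewrite inE cards0 /= even_count // in h.
  by rewrite h add1n subn1.
move=> [x B] [x' B']; rewrite !inE /= => /andP[ne _] _ eq.
case/set0Pn: ne => j jB.
have : (j, x + ys j)%R \in fmap ys (x', B') by rewrite -eq mem_f.
case/imsetP => j' _ [ej ex]; rewrite -ej in ex.
have ex' : x = x' by apply: (addIr (ys j)).
subst x'; congr pair; apply/setP => k.
by rewrite -(mem_f ys x B k) -(mem_f ys x B' k) eq.
Qed.

Theorem mainTheorem8 (l n : nat) (hl : (1 <= l)%N) (hn : (1 <= n)%N)
    (ys : 'I_n -> 'rV['F_2]_l) :
  let M := dyadic_concat ys in
  tanner_acyclic M /\
  #|[set A : {set ('I_n * 'rV['F_2]_l)%type} |
      is_absorbing M A && ind_connected M A]| = (2 ^ l * (2 ^ n.-1 - 1))%N /\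
  (forall A : {set ('I_n * 'rV['F_2]_l)%type},
     is_absorbing M A -> ind_connected M A ->
     absorbing_set M #|A| 0 A /\ ~~ odd #|A| /\ (2 <= #|A| <= n)%N).
Proof.
move=> M; split; first exact: acyc.
split; first exact: count_main.
move=> A ab co.
have := charac ys A; rewrite /M in ab co; rewrite ab co /= => /esym/existsP[x /and3P[sub ne ev]].
have [oc _] := checks_col sub ne.
have oc0 : #|odd_checks (dyadic_concat ys) A| = 0.
  apply/eqP; rewrite cards_eq0; apply/eqP/setP => r.
  by rewrite oc (negbTE ev) andbF inE.
split; first by move: ab; rewrite /is_absorbing oc0.
split=> //.
have e2 : forall c, c \in A -> c.2 = (x + ys c.1)%R.
  move=> c cA; have := subsetP sub c cA; rewrite inE => /eqP <-.
  by rewrite /chk addvK.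
apply/andP; split.
  by move: ne ev; rewrite -card_gt0; case: #|A| => [|[|k]].
rewrite -(@card_in_imset _ _ fst A); last first.
  move=> c c' cA c'A e1.
  by rewrite [c]surjective_pairing [c']surjective_pairing e2 // e2 // e1.
by rewrite -[X in (_ <= X)%N]card_ord max_card.
Qed.
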